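(* Let $m=2k+1$ with $k$ a positive integer, let $n$ be a positive integer, and let $\{B_1,\dots,B_{k(n-1)+1}\}$ be a basis for $\Gamma_{k,n}$. For $i\in[n]$ let $\vec d_i$ be the $n$-dimensional row vector with $\frac12$ in the $i$-th and $(n-i+1)$-th entries and $0$ elsewhere, and let $C_i$ be the $k\times n$ $(0,1)$-matrix whose $i$-th column is all $1$'s and other entries $0$. For $1\le i\le \lceil n/2\rceil-1$ define the $m\times n$ matrix $\tilde C_i=\begin{pmatrix} C_i\\ \vec d_i\\ C_i^\pi\end{pmatrix}$. If $n$ is even, define $\tilde B_i=\begin{pmatrix} B_i\\ \vec d_{n/2}\\ B_i^\pi\end{pmatrix}$; if $n$ is odd, define $\tilde B_i=\begin{pmatrix} B_i\\ \vec e_{\lceil n/2\rceil}\\ B_i^\pi\end{pmatrix}$, where $\vec e_{\lceil n/2\rceil}$ is the $n$-dimensional unit row vector with $1$ in entry $\lceil n/2\rceil$. Then $\{\tilde B_1,\dots,\tilde B_{k(n-1)+1},\tilde C_1,\dots,\tilde C_{\lceil n/2\rceil-1}\}$ is a basis for $\Gamma^\pi_{m,n}$.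
   Context: A real matrix is stochastic if its entries are nonnegative and each row sums to $1$. $\Gamma_{k,n}$ is the set of $k\times n$ stochastic matrices. For $A=(a_{i,j})\in M_{p,n}$, $A^\pi$ is the $p\times n$ matrix with $(A^\pi)_{i,j}=a_{p+1-i,n+1-j}$; $A$ is centrosymmetric if $A=A^\pi$. $\Gamma^\pi_{m,n}$ is the set of $m\times n$ centrosymmetric stochastic matrices; for $m=2k+1$ it is an affine set of dimension $k(n-1)+\lceil n/2\rceil-1$. A basis for such a set $\Gamma$ of affine dimension $d$ means a set of $d+1$ linearly independent elements of $\Gamma$ whose linear span contains $\Gamma$. Block notation $\begin{pmatrix}X\\ \vec v\\ Y\end{pmatrix}$ means the $k\times n$ matrix $X$, then the row $\vec v$, then the $k\times n$ matrix $Y$, stacked vertically. *)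

(* Defs.v *)
From mathcomp Require Import all_boot all_order all_algebra.
Set Implicit Arguments. Unset Strict Implicit. Unset Printing Implicit Defensive.
Import Order.TTheory GRing.Theory Num.Theory.
Local Open Scope ring_scope.

Section Defs.
Variable R : realFieldType.

Definition stochastic (p n : nat) (A : 'M[R]_(p, n)) : Prop :=
  (forall i j, 0 <= A i j) /\ (forall i, \sum_(j < n) A i j = 1).

(* A^pi : (A^pi)_{i,j} = a_{p+1-i, n+1-j} (1-indexed); rev_ord is 0-indexed reversal *)
Definition mx_pi (p n : nat) (A : 'M[R]_(p, n)) : 'M[R]_(p, n) :=
  \matrix_(i < p, j < n) A (rev_ord i) (rev_ord j).

Definition centrosymmetric (p n : nat) (A : 'M[R]_(p, n)) : Prop := A = mx_pi A.

Definition Gamma (p n : nat) (A : 'M[R]_(p, n)) : Prop := stochastic A.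

Definition Gamma_pi (p n : nat) (A : 'M[R]_(p, n)) : Prop :=
  stochastic A /\ centrosymmetric A.

Definition is_basis (p n N : nat) (S : 'M[R]_(p, n) -> Prop)
    (F : 'I_N -> 'M[R]_(p, n)) : Prop :=
  (forall i, S (F i)) /\
  (forall c : 'I_N -> R, \sum_(i < N) c i *: F i = 0 -> forall i, c i = 0) /\
  (forall A, S A -> exists c : 'I_N -> R, A = \sum_(i < N) c i *: F i).

(* vectors, with 0-indexed positions: position i (0-indexed) = entry i+1 *)
(* d_{i+1}: 1/2 at 0-indexed entries i and n-1-i, 0 elsewhere *)
Definition dvec (n i : nat) : 'rV[R]_n :=
  \row_(l < n) (if (l == i :> nat) || (l == (n - 1 - i)%N :> nat) then 2^-1 else 0).

(* e_{i+1}: 1 at 0-indexed entry i *)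
Definition evec (n i : nat) : 'rV[R]_n :=
  \row_(l < n) (if l == i :> nat then 1 else 0).

(* C_{i+1}: k x n, column i (0-indexed) all ones *)
Definition Cmat (k n i : nat) : 'M[R]_(k, n) :=
  \matrix_(r < k, l < n) (if l == i :> nat then 1 else 0).

Definition stack (k n : nat) (X : 'M[R]_(k, n)) (v : 'rV[R]_n)
    (Y : 'M[R]_(k, n)) : 'M[R]_(k + (1 + k), n) :=
  col_mx X (col_mx v Y).

(* middle row of tilde B: d_{n/2} if n even, e_{ceil(n/2)} if n odd *)
Definition mid_row (n : nat) : 'rV[R]_n :=
  if odd n then evec n (n./2) else dvec n (n./2).-1.

Definition Btilde (k n : nat) (B : 'M[R]_(k, n)) : 'M[R]_(k + (1 + k), n) :=
  stack B (mid_row n) (mx_pi B).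

(* tilde C_{i+1}, for 0-indexed i (i.e. 1-indexed i+1 in 1..ceil(n/2)-1) *)
Definition Ctilde (k n i : nat) : 'M[R]_(k + (1 + k), n) :=
  stack (Cmat k n i) (dvec n i) (mx_pi (Cmat k n i)).

Definition tilde_family (k n N : nat) (B : 'I_N -> 'M[R]_(k, n))
    (i : 'I_(N + (uphalf n).-1)) : 'M[R]_(k + (1 + k), n) :=
  match split i with
  | inl a => Btilde (B a)
  | inr b => Ctilde k n b
  end.

End Defs.

(* Main.v *)
Require Import Defs.
From mathcomp Require Import all_boot all_order all_algebra zify ring lra.
Import Order.TTheory GRing.Theory Num.Theory.
Local Open Scope ring_scope.

Lemma mx_piK (R : realFieldType) p n (A : 'M[R]_(p, n)) : mx_pi (mx_pi A) = A.
Proof. by apply/matrixP => i j; rewrite !mxE !rev_ordK. Qed.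

Lemma mx_piE (R : realFieldType) p n (A : 'M[R]_(p, n)) i j :
  mx_pi A i j = A (rev_ord i) (rev_ord j).
Proof. by rewrite mxE. Qed.

Lemma rev_l k (a : 'I_k) :
  rev_ord (lshift (1 + k) a) = rshift k (rshift 1 (rev_ord a)).
Proof. apply/val_inj => /=; have := ltn_ord a; lia. Qed.

Lemma rev_m k (z : 'I_1) :
  rev_ord (rshift k (lshift k z) : 'I_(k + (1 + k))) = rshift k (lshift k z).
Proof. apply/val_inj => /=; have := ltn_ord z; lia. Qed.

Lemma rev_r k (b : 'I_k) :
  rev_ord (rshift k (rshift 1 b) : 'I_(k + (1 + k))) = lshift (1 + k) (rev_ord b).
Proof. apply/val_inj => /=; have := ltn_ord b; lia. Qed.

Lemma mx_pi_stack (R : realFieldType) k n (X : 'M[R]_(k, n)) v Y :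
  mx_pi (stack X v Y) = stack (mx_pi Y) (mx_pi v) (mx_pi X).
Proof.
apply/matrixP => i j; rewrite mxE /stack.
rewrite -(splitK i); case: (split i) => [a|b] /=.
  by rewrite rev_l !col_mxEd col_mxEu mxE.
rewrite -(splitK b); case: (split b) => [z|c] /=.
  by rewrite rev_m !col_mxEd !col_mxEu mxE; rewrite (ord1 (rev_ord z)) (ord1 z).
by rewrite rev_r col_mxEu !col_mxEd mxE.
Qed.

Lemma mx_piD (R : realFieldType) p n (A B : 'M[R]_(p, n)) :
  mx_pi (A + B) = mx_pi A + mx_pi B.
Proof. by apply/matrixP => i j; rewrite !mxE. Qed.

Lemma sum_pi (R : realFieldType) p n N (c : 'I_N -> R) (X : 'I_N -> 'M[R]_(p, n)) :
  \sum_(i < N) c i *: mx_pi (X i) = mx_pi (\sum_(i < N) c i *: X i).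
Proof.
apply/matrixP => i j; rewrite mxE !summxE; apply: eq_bigr => l _.
by rewrite !mxE.
Qed.

Lemma sum_col_mx (R : realFieldType) p q n N (A : 'I_N -> 'M[R]_(p, n)) (B : 'I_N -> 'M[R]_(q, n)) :
  \sum_(i < N) col_mx (A i) (B i) = col_mx (\sum_(i < N) A i) (\sum_(i < N) B i).
Proof.
elim: N A B => [|N IH] A B; first by rewrite !big_ord0 col_mx0.
by rewrite !big_ord_recr /= IH add_col_mx.
Qed.

Lemma sum_stack (R : realFieldType) k n N (c : 'I_N -> R) (X Y : 'I_N -> 'M[R]_(k, n))
  (v : 'I_N -> 'rV[R]_n) :
  \sum_(i < N) c i *: stack (X i) (v i) (Y i) =
  stack (\sum_(i < N) c i *: X i) (\sum_(i < N) c i *: v i) (\sum_(i < N) c i *: Y i).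
Proof.
rewrite /stack; under eq_bigr do rewrite !scale_col_mx.
by rewrite sum_col_mx sum_col_mx.
Qed.


Lemma stoch_pi (R : realFieldType) p n (A : 'M[R]_(p, n)) :
  stochastic A -> stochastic (mx_pi A).
Proof.
case=> h0 h1; split=> [i j|i]; rewrite ?mxE //.
rewrite (reindex_inj rev_ord_inj) /=.
under eq_bigr do rewrite mxE rev_ordK.
exact: h1.
Qed.

Lemma sum_ind (R : realFieldType) n i : (i < n)%N ->
  \sum_(l < n) (if l == i :> nat then (1:R) else 0) = 1.
Proof.
move=> hi; rewrite (bigD1 (Ordinal hi)) //= eqxx big1 ?addr0 // => l hl.
case: eqP => // e; case/eqP: hl; exact: val_inj.
Qed.

Lemma dvecE (R : realFieldType) n i l : i <> (n - 1 - i)%N ->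
  dvec R n i 0 l = 2^-1 * ((if l == i :> nat then 1 else 0) + (if l == (n - 1 - i)%N :> nat then 1 else 0)).
Proof.
move=> hne; rewrite mxE.
case: eqP => e1; case: eqP => e2 /=; try lia; rewrite ?addr0 ?add0r ?mulr1 ?mulr0 //.
Qed.

Lemma stoch_dvec (R : realFieldType) n i : (i < n)%N -> i <> (n - 1 - i)%N ->
  stochastic (dvec R n i).
Proof.
move=> hi hne; split=> [a l|a].
  rewrite mxE; case: ifP => _ //; by rewrite invr_ge0 ler0n.
rewrite (ord1 a).
under eq_bigr do rewrite dvecE //.
rewrite -mulr_sumr big_split /= !sum_ind //; last lia.
by rewrite -[1 + 1]/(2%:R) mulVf // pnatr_eq0.
Qed.

Lemma sym_dvec (R : realFieldType) n i (l : 'I_n) : (i < n)%N ->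
  dvec R n i 0 (rev_ord l) = dvec R n i 0 l.
Proof.
move=> hi; rewrite !mxE /=; have := ltn_ord l => hl.
congr (if _ then _ else _).
by apply/orP/orP; case=> /eqP H; [right|left|right|left]; apply/eqP; lia.
Qed.

Lemma stoch_evec (R : realFieldType) n i : (i < n)%N -> stochastic (evec R n i).
Proof.
move=> hi; split=> [a l|a]; first by rewrite mxE; case: ifP.
by under eq_bigr do rewrite mxE; rewrite sum_ind.
Qed.

Lemma stoch_Cmat (R : realFieldType) k n i : (i < n)%N -> stochastic (Cmat R k n i).
Proof.
move=> hi; split=> [a l|a]; first by rewrite mxE; case: ifP.
by under eq_bigr do rewrite mxE; rewrite sum_ind.
Qed.

Lemma stoch_stack (R : realFieldType) k n (X : 'M[R]_(k, n)) v Y :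
  stochastic X -> stochastic v -> stochastic Y -> stochastic (stack X v Y).
Proof.
case=> X0 X1 [v0 v1] [Y0 Y1]; split=> [i j|i]; rewrite /stack -(splitK i);
  case: (split i) => [a|b] /=.
- by rewrite (@col_mxEu _ k (1+k)).
- rewrite (@col_mxEd _ k (1+k)) -(splitK b); case: (split b) => [z|d] /=.
    by rewrite (@col_mxEu _ 1 k).
  by rewrite (@col_mxEd _ 1 k).
- by under eq_bigr do rewrite (@col_mxEu _ k (1+k)).
- under eq_bigr do rewrite (@col_mxEd _ k (1+k)).
  rewrite -(splitK b); case: (split b) => [z|d] /=.
    by under eq_bigr do rewrite (@col_mxEu _ 1 k).
  by under eq_bigr do rewrite (@col_mxEd _ 1 k).
Qed.

Lemma stack_Gamma_pi (R : realFieldType) k n (X : 'M[R]_(k, n)) v :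
  stochastic X -> stochastic v -> (forall l, v 0 (rev_ord l) = v 0 l) ->
  Gamma_pi (stack X v (mx_pi X)).
Proof.
move=> hX hv hs; split; first by apply: stoch_stack => //; apply: stoch_pi.
rewrite /centrosymmetric mx_pi_stack mx_piK; congr stack.
by apply/matrixP => i j; rewrite mxE (ord1 (rev_ord i)) (ord1 i) hs.
Qed.

Lemma arith_facts {n : nat} : (0 < n)%N ->
  (uphalf n).-1 = (odd n + n./2).-1 /\ n = (odd n + n./2 + n./2)%N.
Proof. move=> _; rewrite uphalf_half; split=> //; have := odd_double_half n; lia. Qed.

Lemma half_lt {n : nat} : (0 < n)%N -> (n./2 < n)%N.
Proof. lia. Qed.

Lemma stoch_mid (R : realFieldType) n : (0 < n)%N -> stochastic (mid_row R n).
Proof.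
move=> hn; rewrite /mid_row; have [_ e] := arith_facts hn.
case: ifP => ho; rewrite ho /= in e.
  by apply: stoch_evec; lia.
by apply: stoch_dvec; lia.
Qed.

Lemma sym_mid (R : realFieldType) n (l : 'I_n) : (0 < n)%N ->
  mid_row R n 0 (rev_ord l) = mid_row R n 0 l.
Proof.
move=> hn; rewrite /mid_row; have [_ e] := arith_facts hn.
case: ifP => ho; rewrite ho /= in e; last by apply: sym_dvec; lia.
rewrite !mxE /=; have := ltn_ord l => hl.
by congr (if _ then _ else _); apply/eqP/eqP; lia.
Qed.

Lemma mid_zero (R : realFieldType) n (l : 'I_n) : (0 < n)%N ->
  (l < (uphalf n).-1)%N -> mid_row R n 0 l = 0.
Proof.
move=> hn; rewrite /mid_row; have [-> e] := arith_facts hn.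
case: ifP => ho; rewrite ho /= in e *; rewrite mxE => hl.
  by case: eqP => //; lia.
by case: ifP => // /orP[] /eqP; lia.
Qed.

Lemma mid_j0 (R : realFieldType) n (hn : (0 < n)%N) :
  mid_row R n 0 (Ordinal (half_lt hn)) != 0.
Proof.
rewrite /mid_row; have [_ e] := arith_facts hn.
case: ifP => ho; rewrite ho /= in e; rewrite mxE /= ?eqxx ?oner_eq0 //.
case: ifP => [_|/negbT]; first by rewrite invr_eq0 pnatr_eq0.
case/norP=> _ /eqP; lia.
Qed.

Lemma dvec_zero (R : realFieldType) n (hn : (0 < n)%N) (b : nat) (l : 'I_n) :
  (b < (uphalf n).-1)%N -> (l = n./2 :> nat) -> dvec R n b 0 l = 0.
Proof.
move=> hb hl; have [e1 e] := arith_facts hn; rewrite e1 in hb.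
by rewrite mxE; case: ifP => // /orP[] /eqP; lia.
Qed.

Lemma le_sum_one {R : realFieldType} {I : finType} (F : I -> R) i :
  (forall j, 0 <= F j) -> F i <= \sum_j F j.
Proof. by move=> h; rewrite (bigD1 i) //= lerDl sumr_ge0. Qed.

Lemma rowsum_comb (R : realFieldType) k n N (B : 'I_N -> 'M[R]_(k, n)) a i :
  (forall l, stochastic (B l)) ->
  \sum_j (\sum_(l < N) a l *: B l) i j = \sum_l a l.
Proof.
move=> hB; under eq_bigr do rewrite summxE.
rewrite exchange_big /=; apply: eq_bigr => l _.
under eq_bigr do rewrite mxE.
by rewrite -mulr_sumr (proj2 (hB l)) mulr1.
Qed.

Lemma span_rows (R : realFieldType) k n N (B : 'I_N -> 'M[R]_(k, n)) :
  (0 < n)%N -> (0 < k)%N -> is_basis (@Gamma R k n) B ->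
  forall (M : 'M[R]_(k, n)) s, (forall i, \sum_j M i j = s) ->
  exists a : 'I_N -> R, M = \sum_(l < N) a l *: B l /\ \sum_l a l = s.
Proof.
move=> hn hk [hB [_ hsp]] M s hM.
have hnR : (n%:R : R) != 0 by rewrite pnatr_eq0 -lt0n.
have hnR' : (0 : R) < n%:R by rewrite ltr0n.
pose J : 'M[R]_(k, n) := const_mx (n%:R^-1).
have hJ : stochastic J.
  split=> [i j|i]; first by rewrite mxE invr_ge0 ler0n.
  under eq_bigr do rewrite mxE.
  by rewrite sumr_const card_ord -(mulr_natr (n%:R^-1)) mulVf.
pose S := \sum_i \sum_j `|M i j|.
pose c := 1 + S + `|s|.
have hS : forall i j, `|M i j| <= S.
  move=> i j.
  have h1 : `|M i j| <= \sum_j `|M i j| by apply: (le_sum_one (fun j => `|M i j|)) => ?; exact: normr_ge0.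
  apply: (le_trans h1).
  apply: (le_sum_one (fun i => \sum_j `|M i j|) i) => i'.
  by apply: sumr_ge0 => ? _; exact: normr_ge0.
have S0 : 0 <= S by apply: le_trans (hS (Ordinal hk) (Ordinal hn)).
pose t := s + n%:R * c.
have ht : 0 < t.
  rewrite /t /c; have : 1 <= n%:R :> R by rewrite ler1n.
  have := ler_norm s; rewrite -normrN; have := ler_norm (- s). nra.
have htR : t != 0 by rewrite gt_eqF.
pose Q : 'M[R]_(k, n) := t^-1 *: (M + const_mx c).
have hQ : stochastic Q.
  split=> [i j|i].
    rewrite !mxE; apply: mulr_ge0; first by rewrite invr_ge0 ltW.
    have := hS i j; have := ler_norm (M i j); rewrite -normrN; have := ler_norm (- M i j).
    rewrite /c; have := normr_ge0 s; lra.
  under eq_bigr do rewrite !mxE.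
  rewrite -mulr_sumr big_split /= hM sumr_const card_ord -(mulr_natr c).
  by rewrite (mulrC c) -/t mulVf.
have [b1 e1] := hsp Q hQ.
have [b2 e2] := hsp J hJ.
have eM : M = t *: Q - (n%:R * c) *: J.
  apply/matrixP => i j; rewrite !mxE; field; by rewrite hnR htR.
exists (fun l => t * b1 l - n%:R * c * b2 l).
have eM' : M = \sum_(l < N) (t * b1 l - n%:R * c * b2 l) *: B l.
  rewrite eM e1 e2 !scaler_sumr -sumrB; apply: eq_bigr => l _.
  by rewrite scalerBl !scalerA.
split=> //.
by rewrite -(hM (Ordinal hk)) {1}eM' rowsum_comb.
Qed.

Lemma tf_l (R : realFieldType) k n N (B : 'I_N -> 'M[R]_(k, n)) (x : 'I_N) :
  tilde_family B (lshift (uphalf n).-1 x) = Btilde (B x).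
Proof. by rewrite /tilde_family (unsplitK (inl _ x)). Qed.

Lemma tf_r (R : realFieldType) k n N (B : 'I_N -> 'M[R]_(k, n)) (y : 'I_(uphalf n).-1) :
  tilde_family B (rshift N y) = Ctilde R k n y.
Proof. by rewrite /tilde_family (unsplitK (inr _ y)). Qed.

Lemma sum_family (R : realFieldType) k n N (B : 'I_N -> 'M[R]_(k, n)) (c : 'I_(N + (uphalf n).-1) -> R) :
  \sum_i c i *: tilde_family B i =
  stack (\sum_x c (lshift _ x) *: B x + \sum_y c (rshift N y) *: Cmat R k n y)
        (\sum_x c (lshift _ x) *: mid_row R n + \sum_y c (rshift N y) *: dvec R n y)
        (\sum_x c (lshift _ x) *: mx_pi (B x) + \sum_y c (rshift N y) *: mx_pi (Cmat R k n y)).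
Proof.
rewrite big_split_ord /=.
under eq_bigr do rewrite tf_l.
under [X in _ + X = _]eq_bigr do rewrite tf_r.
by rewrite /Btilde /Ctilde !sum_stack /stack add_col_mx add_col_mx.
Qed.

Lemma comb_entry (R : realFieldType) n N h (a : 'I_N -> R) (cb : 'I_h -> R)
  (u : 'rV[R]_n) (w : 'I_h -> 'rV[R]_n) j :
  (\sum_x a x *: u + \sum_y cb y *: w y) 0 j = (\sum_x a x) * u 0 j + \sum_y cb y * w y 0 j.
Proof.
rewrite mxE !summxE mulr_suml; congr (_ + _); apply: eq_bigr => x _; by rewrite mxE.
Qed.

Lemma dvec_at (R : realFieldType) {n} (hn : (0 < n)%N) {y y' : nat} (l : 'I_n) :
  (y < (uphalf n).-1)%N -> (y' < (uphalf n).-1)%N -> l = y :> nat ->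
  dvec R n y' 0 l = if y' == y then 2^-1 else 0.
Proof.
move=> hy hy' hl; have [e1 e] := arith_facts hn; rewrite e1 in hy hy'.
rewrite mxE; congr (if _ then _ else _).
by apply/orP/eqP => [[] /eqP|]; try lia; move=> ->; left; apply/eqP.
Qed.

Lemma hle n : ((uphalf n).-1 <= n)%N.
Proof. rewrite uphalf_half; lia. Qed.

Lemma y_facts {n} (hn : (0 < n)%N) (y : nat) : (y < (uphalf n).-1)%N ->
  (y < n)%N /\ y <> (n - 1 - y)%N.
Proof. have [e1 e] := arith_facts hn; rewrite e1; lia. Qed.

Lemma middle_fact {n} (hn : (0 < n)%N) (j : nat) : (j < n)%N ->
  ~~ (j < (uphalf n).-1)%N -> ~~ (n - 1 - j < (uphalf n).-1)%N ->
  j = n./2 \/ j = (n - 1 - n./2)%N.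
Proof. have [e1 e] := arith_facts hn; rewrite e1; lia. Qed.

Lemma unstack (R : realFieldType) k n (X : 'M[R]_(k, n)) v Y :
  stochastic (stack X v Y) -> stochastic X /\ stochastic v.
Proof.
case=> h0 h1; split; split.
- by move=> i j; have := h0 (lshift _ i) j; rewrite /stack (@col_mxEu _ k (1+k)).
- by move=> i; have := h1 (lshift _ i); under eq_bigr do rewrite /stack (@col_mxEu _ k (1+k)).
- move=> i j; have := h0 (rshift k (lshift k i)) j.
  by rewrite /stack (@col_mxEd _ k (1+k)) (@col_mxEu _ 1 k).
- move=> i; have := h1 (rshift k (lshift k i)).
  by under eq_bigr do rewrite /stack (@col_mxEd _ k (1+k)) (@col_mxEu _ 1 k).
Qed.

Lemma sub_entry (R : realFieldType) p q (A B : 'M[R]_(p, q)) i j : (A - B) i j = A i j - B i j.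
Proof. by rewrite !mxE. Qed.

Lemma sum_family2 (R : realFieldType) k n N (B : 'I_N -> 'M[R]_(k, n)) (al : 'I_N -> R) (cb : 'I_(uphalf n).-1 -> R) :
  \sum_i (match split i with inl x => al x | inr y => cb y end) *: tilde_family B i =
  stack (\sum_x al x *: B x + \sum_y cb y *: Cmat R k n y)
        (\sum_x al x *: mid_row R n + \sum_y cb y *: dvec R n y)
        (\sum_x al x *: mx_pi (B x) + \sum_y cb y *: mx_pi (Cmat R k n y)).
Proof.
rewrite sum_family; congr stack; congr (_ + _); apply: eq_bigr => x _;
  first [rewrite (unsplitK (inl _ x)) | rewrite (unsplitK (inr _ x))] => //.
Qed.

Theorem mainTheorem10 (R : realFieldType) (k n : nat) (hk : (0 < k)%N) (hn : (0 < n)%N)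
    (B : 'I_(k * (n - 1) + 1) -> 'M[R]_(k, n)) :
  is_basis (@Gamma R k n) B ->
  is_basis (@Gamma_pi R (k + (1 + k)) n) (tilde_family B).
Proof.
move=> hB; have [hBm [hBi hBs]] := hB.
set N := (k * (n - 1) + 1)%N in B hB hBm hBi hBs *.
set h := (uphalf n).-1.
have hhn : (h <= n)%N := hle n.
split; [|split].
- move=> i; rewrite /tilde_family; case: (split i) => [x|y].
    apply: stack_Gamma_pi; [exact: hBm x | exact: stoch_mid | move=> l; exact: sym_mid].
  have [hy1 hy2] := y_facts hn y (ltn_ord y).
  apply: stack_Gamma_pi; [exact: stoch_Cmat | exact: stoch_dvec | move=> l; exact: sym_dvec].
- move=> c H.
  have := H; rewrite sum_family => H'.
  have : stack (R:=R) (0 : 'M_(k, n)) 0 0 = 0 by rewrite /stack !col_mx0.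
  move=> e0; rewrite -e0 /stack in H'.
  case/eq_col_mx: H' => htop /eq_col_mx [hmid _].
  have hcb : forall y : 'I_h, c (rshift N y) = 0.
    move=> y; have := congr1 (fun r : 'rV_n => r 0 (widen_ord hhn y)) hmid.
    rewrite /= comb_entry mid_zero ?mulr0 ?add0r //= mxE.
    rewrite (bigD1 y) //= big1 => [|y' hy'].
      rewrite (dvec_at R hn (widen_ord hhn y) (ltn_ord y) (ltn_ord y)) // eqxx addr0 => /eqP.
      by rewrite mulf_eq0 invr_eq0 pnatr_eq0 orbF => /eqP.
    rewrite (dvec_at R hn (widen_ord hhn y) (ltn_ord y) (ltn_ord y')) //.
    case: eqP => [e|]; last by rewrite mulr0.
    by case/eqP: hy'; apply: val_inj.
  have hsa : \sum_x c (lshift h x) = 0.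
    have := congr1 (fun r : 'rV_n => r 0 (Ordinal (half_lt hn))) hmid.
    rewrite /= comb_entry [X in _ + X]big1 => [|y _]; last by rewrite (dvec_zero R n hn y _ (ltn_ord y)) // mulr0.
    rewrite addr0 mxE => /eqP; rewrite mulf_eq0 (negbTE (mid_j0 R n hn)) orbF.
    by move/eqP.
  have ha : forall x, c (lshift h x) = 0.
    apply: hBi; move: htop; rewrite [X in _ + X]big1 ?addr0 // => y _.
    by rewrite hcb scale0r.
  by move=> i; rewrite -(splitK i); case: (split i) => [x|y] /=; [exact: ha|exact: hcb].
- move=> A [hA hcs].
  pose X : 'M_(k, n) := usubmx A.
  pose v : 'rV_n := usubmx (dsubmx A).
  pose Y : 'M_(k, n) := dsubmx (dsubmx A).
  have eA : A = stack X v Y by rewrite /stack /v /Y vsubmxK /X vsubmxK.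
  have := hcs; rewrite /centrosymmetric eA mx_pi_stack /stack.
  case/eq_col_mx => _ /eq_col_mx [ev eY].
  have vs : forall l, v 0 (rev_ord l) = v 0 l.
    by move=> l; rewrite [in RHS]ev mx_piE (ord1 (rev_ord _)).
  rewrite eA in hA; have [hX hv] := unstack R k n X v Y hA.
  pose cb (y : 'I_h) := 2 * v 0 (widen_ord hhn y).
  pose M := X - \sum_y cb y *: Cmat R k n y.
  have hC : forall y : 'I_h, stochastic (Cmat R k n y).
    move=> y; apply: stoch_Cmat; exact: leq_trans (ltn_ord y) hhn.
  have hM : forall i, \sum_j M i j = 1 - \sum_y cb y.
    move=> i; under eq_bigr do rewrite sub_entry.
    by rewrite sumrB (proj2 hX) rowsum_comb.
  have [al [eM hal]] := span_rows R k n N B hn hk hB M _ hM.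
  exists (fun i => match split i with inl x => al x | inr y => cb y end).
  rewrite sum_family2 /stack.
  have eX : X = \sum_x al x *: B x + \sum_y cb y *: Cmat R k n y.
    by rewrite -eM /M subrK.
  congr col_mx => //; congr col_mx; last by rewrite eY eX mx_piD !sum_pi.
  pose f (j : 'I_n) := v 0 j - ((\sum_x al x) * mid_row R n 0 j + \sum_y cb y * dvec R n y 0 j).
  have fsym : forall j, f (rev_ord j) = f j.
    move=> j; rewrite /f vs sym_mid //; congr (_ - (_ * _ + _)); apply: eq_bigr => y _.
    have [a _] := y_facts hn y (ltn_ord y).
    by rewrite sym_dvec.
  have fout : forall j : 'I_n, (j < h)%N -> f j = 0.
    move=> j hj; rewrite /f mid_zero // mulr0 add0r (bigD1 (Ordinal hj)) //= big1 => [|y hy].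
      rewrite (dvec_at R hn j hj hj erefl) eqxx addr0 /cb.
      have -> : widen_ord hhn (Ordinal hj) = j by apply: val_inj.
      by rewrite mulrAC mulfV ?pnatr_eq0 // mul1r subrr.
    rewrite (dvec_at R hn j hj (ltn_ord y) erefl).
    case: eqP => [e|]; last by rewrite mulr0.
    by case/eqP: hy; apply: val_inj.
  have hd : forall y : 'I_h, \sum_j cb y * dvec R n y 0 j = cb y.
    move=> y; have [a b] := y_facts hn y (ltn_ord y).
    by rewrite -mulr_sumr (proj2 (stoch_dvec R n y a b) 0) mulr1.
  have s1 : \sum_j v 0 j = 1 := proj2 hv 0.
  have s2 : \sum_j mid_row R n 0 j = 1 := proj2 (stoch_mid R n hn) 0.
  have s3 : \sum_j \sum_y cb y * dvec R n y 0 j = \sum_y cb y.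
    by rewrite exchange_big; apply: eq_bigr => y _; exact: hd y.
  have fsum : \sum_j f j = 0.
    by rewrite /f sumrB big_split /= -mulr_sumr s1 s2 s3 mulr1 hal subrK subrr.
  pose j0 := Ordinal (half_lt hn).
  have [e1 e2] := arith_facts hn.
  have fmid : forall j : 'I_n, ~~ (j < h)%N -> ~~ (rev_ord j < h)%N -> f j = f j0.
    move=> j H1 H2; have e3 : (rev_ord j : nat) = (n - 1 - j)%N by rewrite /=; lia.
    rewrite e3 in H2.
    case: (middle_fact hn j (ltn_ord j) H1 H2) => e.
      by have -> : j = j0 by apply: val_inj.
    have -> : j = rev_ord j0 by apply: val_inj => /=; rewrite e; lia.
    by rewrite fsym.
  pose F (j : 'I_n) : R := if (j < h)%N || (rev_ord j < h)%N then 0 else 1.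
  have hsum : \sum_j f j = f j0 * \sum_j F j.
    rewrite mulr_sumr; apply: eq_bigr => j _; rewrite /F.
    case: ifP => [/orP[] H|/norP[H1 H2]].
    - by rewrite fout // mulr0.
    - by rewrite -fsym fout // mulr0.
    - by rewrite mulr1 fmid.
  have hK : 0 < \sum_j F j.
    apply: (lt_le_trans _ (le_sum_one F j0 _)).
      rewrite /F; have -> : ((j0 < h)%N || (rev_ord j0 < h)%N) = false.
        by apply/negbTE/norP; rewrite /= /h e1; split; lia.
      by rewrite ltr01.
    by move=> j; rewrite /F; case: ifP => _ //; rewrite ler01.
  have fj0 : f j0 = 0.
    move: fsum; rewrite hsum => /eqP; rewrite mulf_eq0 (gt_eqF hK) orbF.
    by move/eqP.
  have f0 : forall j, f j = 0.
    move=> j; case: (boolP (j < h)%N) => H1; first exact: fout.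
    case: (boolP (rev_ord j < h)%N) => H2; first by rewrite -fsym fout.
    by rewrite fmid.
  apply/rowP => j; rewrite comb_entry.
  by move: (f0 j); rewrite /f => /eqP; rewrite subr_eq0 => /eqP.
Qed.
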